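(* Let $p_2\in H^2_\mathbb{C}$ be the unique fixed point of $G_2$. The indices $j\ge1$ such that $p_2\in\mathcal{B}_j$ are exactly $j\in\{1,2,3,5,10,11\}$. At $p_2$, any two and any three of the six differentials $df_1,df_2,df_3,df_5,df_{10},df_{11}$ are linearly independent, and among the four-element subsets of $\{1,2,3,5,10,11\}$ the only ones whose differentials at $p_2$ are linearly dependent (i.e. whose four bisectors do not meet transversely at $p_2$) are $\{1,2,3,10\}$, $\{1,2,5,11\}$ and $\{3,5,10,11\}$.
   Context: Hermitian form on $\mathbb{C}^3$: $\langle V,W\rangle=V_1\overline{W_3}+V_2\overline{W_2}+V_3\overline{W_1}$. Let $$G_1=\begin{pmatrix}1&1&-\frac{1+i\sqrt7}{2}\\0&1&-1\\0&0&1\end{pmatrix},\quad G_3=\begin{pmatrix}1&0&0\\-1&1&0\\ \frac{-1+i\sqrt7}{2}&1&1\end{pmatrix},\quad G_2=G_3G_1^{-1}G_3^{-1}G_1,$$ $Q=(1,0,0)^T$. Set $\gamma_1=G_2,\gamma_2=G_2^{-1},\gamma_3=G_3,\gamma_4=G_3^{-1}$ and, for $k\ge1$ and $1\le j\le4$, $\gamma_{8k-4+j}=G_1^k\gamma_jG_1^{-k}$, $\gamma_{8k+j}=G_1^{-k}\gamma_jG_1^{k}$ (so $\gamma_5=G_1G_2G_1^{-1}$, $\gamma_{10}=G_1^{-1}G_2^{-1}G_1$, $\gamma_{11}=G_1^{-1}G_3G_1$). For $Z\in\mathbb{C}^3\setminus\{0\}$, $f_j(Z)=|\langle Z,Q\rangle|^2-|\langle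 Z,\gamma_jQ\rangle|^2$, viewed on the affine chart $Z_3\ne0$ of $\mathbb{C}P^2\cong$ (locally) $\mathbb{R}^4$; $\mathcal{B}_j=\{[Z]: f_j(Z)=0,\ \langle Z,Z\rangle<0\}$. Differentials are real differentials at $p_2$. *)

(* Defs.v *)
From Stdlib Require Import Reals Lra Lia Psatz List.
Import ListNotations.
Open Scope R_scope.

Record C := mkC { re : R; im : R }.
Definition C0 : C := mkC 0 0.
Definition C1 : C := mkC 1 0.
Definition RtoC (x : R) : C := mkC x 0.
Definition Cadd (z w : C) : C := mkC (re z + re w) (im z + im w).
Definition Copp (z : C) : C := mkC (- re z) (- im z).
Definition Csub (z w : C) : C := Cadd z (Copp w).
Definition Cmul (z w : C) : C :=
  mkC (re z * re w - im z * im w) (re z * im w + im z * re w).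
Definition Cconj (z : C) : C := mkC (re z) (- im z).
Definition Cnorm2 (z : C) : R := re z * re z + im z * im z.
Definition Cinv (z : C) : C := mkC (re z / Cnorm2 z) (- im z / Cnorm2 z).

Record V3 := mkV3 { v0 : C; v1 : C; v2 : C }.
Definition Vscale (l : C) (v : V3) : V3 := mkV3 (Cmul l (v0 v)) (Cmul l (v1 v)) (Cmul l (v2 v)).

Definition herm (V W : V3) : C :=
  Cadd (Cmul (v0 V) (Cconj (v2 W)))
       (Cadd (Cmul (v1 V) (Cconj (v1 W))) (Cmul (v2 V) (Cconj (v0 W)))).

(* a matrix is given by its entries A i j, 0 <= i, j <= 2 *)
Definition mat := nat -> nat -> C.
Definition mmul (A B : mat) : mat := fun i j =>
  Cadd (Cmul (A i 0%nat) (B 0%nat j))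
       (Cadd (Cmul (A i 1%nat) (B 1%nat j)) (Cmul (A i 2%nat) (B 2%nat j))).
Definition mvec (A : mat) (v : V3) : V3 :=
  mkV3 (Cadd (Cmul (A 0%nat 0%nat) (v0 v)) (Cadd (Cmul (A 0%nat 1%nat) (v1 v)) (Cmul (A 0%nat 2%nat) (v2 v))))
       (Cadd (Cmul (A 1%nat 0%nat) (v0 v)) (Cadd (Cmul (A 1%nat 1%nat) (v1 v)) (Cmul (A 1%nat 2%nat) (v2 v))))
       (Cadd (Cmul (A 2%nat 0%nat) (v0 v)) (Cadd (Cmul (A 2%nat 1%nat) (v1 v)) (Cmul (A 2%nat 2%nat) (v2 v)))).
Definition mid : mat := fun i j => if Nat.eqb i j then C1 else C0.
Fixpoint mpow (A : mat) (k : nat) : mat :=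
  match k with O => mid | S k' => mmul A (mpow A k') end.

Definition det (A : mat) : C :=
  let a := A in
  Csub (Cadd (Cmul (a 0%nat 0%nat) (Csub (Cmul (a 1%nat 1%nat) (a 2%nat 2%nat)) (Cmul (a 1%nat 2%nat) (a 2%nat 1%nat))))
             (Cmul (a 0%nat 2%nat) (Csub (Cmul (a 1%nat 0%nat) (a 2%nat 1%nat)) (Cmul (a 1%nat 1%nat) (a 2%nat 0%nat)))))
       (Cmul (a 0%nat 1%nat) (Csub (Cmul (a 1%nat 0%nat) (a 2%nat 2%nat)) (Cmul (a 1%nat 2%nat) (a 2%nat 0%nat)))).
(* cofactor-based adjugate: adj A i j = cofactor of entry (j,i) *)
Definition adj (A : mat) : mat := fun i j =>
  let j1 := ((j + 1) mod 3)%nat in let j2 := ((j + 2) mod 3)%nat in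
  let i1 := ((i + 1) mod 3)%nat in let i2 := ((i + 2) mod 3)%nat in
  Csub (Cmul (A j1 i1) (A j2 i2)) (Cmul (A j1 i2) (A j2 i1)).
Definition minv (A : mat) : mat := fun i j => Cmul (Cinv (det A)) (adj A i j).

Definition s7 : R := sqrt 7.

Definition G1 : mat := fun i j =>
  match i, j with
  | 0, 0 => C1 | 0, 1 => C1 | 0, 2 => mkC (-1/2) (- s7 / 2)
  | 1, 1 => C1 | 1, 2 => mkC (-1) 0
  | 2, 2 => C1
  | _, _ => C0
  end%nat.

Definition G3 : mat := fun i j =>
  match i, j with
  | 0, 0 => C1
  | 1, 0 => mkC (-1) 0 | 1, 1 => C1
  | 2, 0 => mkC (-1/2) (s7 / 2) | 2, 1 => C1 | 2, 2 => C1
  | _, _ => C0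
  end%nat.

Definition G2 : mat := mmul (mmul (mmul G3 (minv G1)) (minv G3)) G1.

Definition Qv : V3 := mkV3 C1 C0 C0.

Definition gamma_base (j : nat) : mat :=
  match j with
  | 1 => G2 | 2 => minv G2 | 3 => G3 | _ => minv G3
  end%nat.

(* For k >= 1 and 1 <= j' <= 4:
     gamma_(8k-4+j') = G1^k gamma_j' G1^-k,  gamma_(8k+j') = G1^-k gamma_j' G1^k.
   For j >= 5 write j - 5 = 8q + r (0 <= r < 8), k = q+1. (gamma 0 is unused.) *)
Definition gamma (j : nat) : mat :=
  if (j <=? 4)%nat then gamma_base j
  else
    let q := ((j - 5) / 8)%nat in
    let r := ((j - 5) mod 8)%nat in
    let k := S q in
    if (r <? 4)%nat
    then mmul (mmul (mpow G1 k) (gamma_base (S r))) (mpow (minv G1) k)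
    else mmul (mmul (mpow (minv G1) k) (gamma_base (r - 3))) (mpow G1 k).

Definition f (j : nat) (Z : V3) : R :=
  Cnorm2 (herm Z Qv) - Cnorm2 (herm Z (mvec (gamma j) Qv)).

Record R4 := mkR4 { x0 : R; x1 : R; x2 : R; x3 : R }.
Definition R4add (p h : R4) : R4 := mkR4 (x0 p + x0 h) (x1 p + x1 h) (x2 p + x2 h) (x3 p + x3 h).
Definition R4scale (c : R) (h : R4) : R4 := mkR4 (c * x0 h) (c * x1 h) (c * x2 h) (c * x3 h).
Definition R4norm (h : R4) : R :=
  sqrt (x0 h * x0 h + x1 h * x1 h + x2 h * x2 h + x3 h * x3 h).

Definition chart (p : R4) : V3 := mkV3 (mkC (x0 p) (x1 p)) (mkC (x2 p) (x3 p)) C1.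

Definition fchart (j : nat) (p : R4) : R := f j (chart p).

(* complex hyperbolic plane (it lies entirely in the chart Z3 <> 0) *)
Definition in_H2C (p : R4) : Prop := re (herm (chart p) (chart p)) < 0.

Definition fixed_by_G2 (p : R4) : Prop :=
  in_H2C p /\ exists l : C, mvec G2 (chart p) = Vscale l (chart p).

Definition in_bisector (j : nat) (p : R4) : Prop := fchart j p = 0 /\ in_H2C p.

Definition R_linear (L : R4 -> R) : Prop :=
  (forall h k, L (R4add h k) = L h + L k) /\ (forall c h, L (R4scale c h) = c * L h).

Definition is_differential (F : R4 -> R) (p : R4) (L : R4 -> R) : Prop :=
  R_linear L /\
  forall eps, 0 < eps -> exists delta, 0 < delta /\
    forall h, R4norm h < delta -> Rabs (F (R4add p h) - F p - L h) <= eps * R4norm h.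

Fixpoint lin_comb (cs : list R) (Ls : list (R4 -> R)) (h : R4) : R :=
  match cs, Ls with
  | c :: cs', L :: Ls' => c * L h + lin_comb cs' Ls' h
  | _, _ => 0
  end.

Definition lin_indep (Ls : list (R4 -> R)) : Prop :=
  forall cs : list R, length cs = length Ls ->
    (forall h, lin_comb cs Ls h = 0) -> forall c, In c cs -> c = 0.

Definition six : list nat := [1; 2; 3; 5; 10; 11]%nat.

(* Main.v *)
Require Import Defs.
From Stdlib Require Import Reals List Permutation Lra Lia Psatz.
Import ListNotations.
Open Scope R_scope.

Lemma s7_2 : s7 * s7 = 7. Proof. unfold s7; apply sqrt_sqrt; lra. Qed.
Lemma s7_pos : 0 < s7. Proof. unfold s7; apply sqrt_lt_R0; lra. Qed.
Lemma s7_pow : forall n, s7 ^ (S (S n)) = 7 * s7 ^ n.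
Proof. intro n. simpl. rewrite <- Rmult_assoc, s7_2. ring. Qed.
Ltac s7ring := unfold Rdiv; ring_simplify; repeat rewrite s7_pow; field.

Ltac cunf := cbv [Cadd Copp Csub Cmul Cconj Cnorm2 Cinv RtoC Defs.C0 Defs.C1 herm mvec Vscale chart Qv] in *;
  cbn [re im v0 v1 v2 x0 x1 x2 x3] in *.

Ltac ceq := lazymatch goal with |- mkC _ _ = mkC _ _ => apply f_equal2 | _ => idtac end.
Ltac veq := (lazymatch goal with |- mkV3 _ _ _ = mkV3 _ _ _ => apply f_equal3 | _ => idtac end); ceq; s7ring.

Lemma mvec_mmul : forall A B v, mvec (mmul A B) v = mvec A (mvec B v).
Proof. intros A B [[a b] [c d] [e g]]. unfold mmul. cunf. veq. Qed.

Lemma detG1 : det G1 = Defs.C1.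
Proof. unfold det, G1. cunf. veq. Qed.
Lemma detG3 : det G3 = Defs.C1.
Proof. unfold det, G3. cunf. veq. Qed.

Definition V (a b c d e g : R) := mkV3 (mkC a b) (mkC c d) (mkC e g).

Lemma mvG1 : forall a b c d e g, mvec G1 (V a b c d e g) =
  V (a + c - e/2 + s7*g/2) (b + d - s7*e/2 - g/2) (c - e) (d - g) e g.
Proof. intros. unfold G1, V. cunf. veq. Qed.
Lemma mvG1i : forall a b c d e g, mvec (minv G1) (V a b c d e g) =
  V (a - c - e/2 - s7*g/2) (b - d + s7*e/2 - g/2) (c + e) (d + g) e g.
Proof. intros. unfold minv. rewrite detG1. cbv [adj G1 V Nat.modulo Nat.divmod Nat.add Nat.sub snd fst]. cunf. veq. Qed.

Lemma mvG3 : forall a b c d e g, mvec G3 (V a b c d e g) =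
  V a b (c - a) (d - b) (e + c - a/2 - s7*b/2) (g + d + s7*a/2 - b/2).
Proof. intros. unfold G3, V. cunf. veq. Qed.
Lemma mvG3i : forall a b c d e g, mvec (minv G3) (V a b c d e g) =
  V a b (c + a) (d + b) (e - c - a/2 + s7*b/2) (g - d - s7*a/2 - b/2).
Proof. intros. unfold minv. rewrite detG3. cbv [adj G3 V Nat.modulo Nat.divmod Nat.add Nat.sub snd fst]. cunf. veq. Qed.

Lemma mvG2 : forall a b c d e g, mvec G2 (V a b c d e g) =
  V (2*a + 3*c/2 + s7*d/2 - e) (2*b + 3*d/2 - s7*c/2 - g)
    (-3*a/2 + s7*b/2 - c) (-3*b/2 - s7*a/2 - d) (-a) (-b).
Proof. intros. unfold G2. rewrite !mvec_mmul, mvG1, mvG3i, mvG1i, mvG3. unfold V. veq. Qed.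

Lemma Ceta : forall z, z = mkC (re z) (im z). Proof. destruct z; reflexivity. Qed.

Lemma col0 : forall A a b c d e g, mvec A (V 1 0 0 0 0 0) = V a b c d e g ->
  A 0%nat 0%nat = mkC a b /\ A 1%nat 0%nat = mkC c d /\ A 2%nat 0%nat = mkC e g.
Proof. intros A a b c d e g H. unfold V in H. cunf. injection H; intros.
  repeat split; match goal with |- ?x = _ => rewrite (Ceta x) end; f_equal; lra. Qed.
Lemma col1 : forall A a b c d e g, mvec A (V 0 0 1 0 0 0) = V a b c d e g ->
  A 0%nat 1%nat = mkC a b /\ A 1%nat 1%nat = mkC c d /\ A 2%nat 1%nat = mkC e g.
Proof. intros A a b c d e g H. unfold V in H. cunf. injection H; intros.
  repeat split; match goal with |- ?x = _ => rewrite (Ceta x) end; f_equal; lra. Qed.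
Lemma col2 : forall A a b c d e g, mvec A (V 0 0 0 0 1 0) = V a b c d e g ->
  A 0%nat 2%nat = mkC a b /\ A 1%nat 2%nat = mkC c d /\ A 2%nat 2%nat = mkC e g.
Proof. intros A a b c d e g H. unfold V in H. cunf. injection H; intros.
  repeat split; match goal with |- ?x = _ => rewrite (Ceta x) end; f_equal; lra. Qed.

Lemma G2c0 : G2 0%nat 0%nat = mkC 2 0 /\ G2 1%nat 0%nat = mkC (-3/2) (-s7/2) /\ G2 2%nat 0%nat = mkC (-1) 0.
Proof. apply col0. rewrite mvG2. unfold V. veq. Qed.
Lemma G2c1 : G2 0%nat 1%nat = mkC (3/2) (-s7/2) /\ G2 1%nat 1%nat = mkC (-1) 0 /\ G2 2%nat 1%nat = mkC 0 0.
Proof. apply col1. rewrite mvG2. unfold V. veq. Qed.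
Lemma G2c2 : G2 0%nat 2%nat = mkC (-1) 0 /\ G2 1%nat 2%nat = mkC 0 0 /\ G2 2%nat 2%nat = mkC 0 0.
Proof. apply col2. rewrite mvG2. unfold V. veq. Qed.

Lemma detG2 : det G2 = Defs.C1.
Proof. destruct G2c0 as [e00 [e10 e20]]. destruct G2c1 as [e01 [e11 e21]]. destruct G2c2 as [e02 [e12 e22]].
  unfold det. rewrite e00, e10, e20, e01, e11, e21, e02, e12, e22. cunf. veq. Qed.

Lemma mvG2iQ : mvec (minv G2) Qv = V 0 0 0 0 (-1) 0.
Proof. destruct G2c0 as [e00 [e10 e20]]. destruct G2c1 as [e01 [e11 e21]]. destruct G2c2 as [e02 [e12 e22]].
  unfold minv. rewrite detG2. cbv [adj Nat.modulo Nat.divmod Nat.add Nat.sub snd fst].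
  unfold V. cunf. rewrite ?e00, ?e10, ?e20, ?e01, ?e11, ?e21, ?e02, ?e12, ?e22. cbn [re im]. veq. Qed.

Lemma QvV : Qv = V 1 0 0 0 0 0. Proof. reflexivity. Qed.

Lemma mvec_mid : forall v, mvec mid v = v.
Proof. intros [[a b] [c d] [e g]]. cbv [mid Nat.eqb]. cunf. veq. Qed.

Lemma mpow_fix : forall A v k, mvec A v = v -> mvec (mpow A k) v = v.
Proof. intros A v k H. induction k; simpl mpow. apply mvec_mid. rewrite mvec_mmul, IHk, H. reflexivity. Qed.

Lemma G1Q : mvec G1 Qv = Qv. Proof. rewrite QvV, mvG1. unfold V. veq. Qed.
Lemma G1iQ : mvec (minv G1) Qv = Qv. Proof. rewrite QvV, mvG1i. unfold V. veq. Qed.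

Lemma mvG1k : forall k a b c d e g, mvec (mpow G1 k) (V a b c d e g) =
  V (a + INR k*(c - e/2 + s7*g/2) - INR k*(INR k-1)/2*e) (b + INR k*(d - s7*e/2 - g/2) - INR k*(INR k-1)/2*g)
    (c - INR k*e) (d - INR k*g) e g.
Proof. intros. induction k; simpl mpow.
  - rewrite mvec_mid. simpl INR. unfold V. veq.
  - rewrite mvec_mmul, IHk, mvG1, S_INR. unfold V. veq. Qed.

Lemma mvG1ik : forall k a b c d e g, mvec (mpow (minv G1) k) (V a b c d e g) =
  V (a - INR k*(c - e/2 + s7*g/2) - INR k*(INR k+1)/2*e) (b - INR k*(d - s7*e/2 - g/2) - INR k*(INR k+1)/2*g)
    (c + INR k*e) (d + INR k*g) e g.
Proof. intros. induction k; simpl mpow.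
  - rewrite mvec_mid. simpl INR. unfold V. veq.
  - rewrite mvec_mmul, IHk, mvG1i, S_INR. unfold V. veq. Qed.

Definition b1 := V 2 0 (-3/2) (-s7/2) (-1) 0.
Definition b2 := V 0 0 0 0 (-1) 0.
Definition b3 := V 1 0 (-1) 0 (-1/2) (s7/2).
Definition b4 := V 1 0 1 0 (-1/2) (-s7/2).
Lemma W1 : mvec (gamma_base 1) Qv = b1. Proof. simpl. rewrite QvV, mvG2. unfold b1, V. veq. Qed.
Lemma W2 : mvec (gamma_base 2) Qv = b2. Proof. simpl. apply mvG2iQ. Qed.
Lemma W3 : mvec (gamma_base 3) Qv = b3. Proof. simpl. rewrite QvV, mvG3. unfold b3, V. veq. Qed.
Lemma W4 : mvec (gamma_base 4) Qv = b4. Proof. simpl. rewrite QvV, mvG3i. unfold b4, V. veq. Qed.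

Definition p2 : R4 := mkR4 (-1) 0 (3/4) (s7/4).

Definition P0 t := 3/2*t - 2*t^2 + 3/4*t^3 - 1/4*t^4.
Definition P1 t := -3/2*t - 2*t^2 - 3/4*t^3 - 1/4*t^4.
Definition P2 t := -5/4*t - 7/4*t^2 - t^3 - 1/2*t^4.
Definition P3 t := -9/2 - 4*t - 4*t^2 - 2*t^3 - 1/2*t^4.
Definition P6 t := 5/4*t - 7/4*t^2 + t^3 - 1/2*t^4.
Definition P7 t := -9/2 + 4*t - 4*t^2 + 2*t^3 - 1/2*t^4.

Definition fv (W : V3) := Cnorm2 (herm (chart p2) Qv) - Cnorm2 (herm (chart p2) W).

Ltac fvcomp := intros; unfold fv, b1, b2, b3, b4;
  rewrite ?mvG1k, ?mvG1ik; unfold V, p2; cunf; unfold P0, P1, P2, P3, P6, P7; s7ring.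

Lemma fr0 : forall k, fv (mvec (mpow G1 k) b1) = P0 (INR k). Proof. fvcomp. Qed.
Lemma fr1 : forall k, fv (mvec (mpow G1 k) b2) = P1 (INR k). Proof. fvcomp. Qed.
Lemma fr2 : forall k, fv (mvec (mpow G1 k) b3) = P2 (INR k). Proof. fvcomp. Qed.
Lemma fr3 : forall k, fv (mvec (mpow G1 k) b4) = P3 (INR k). Proof. fvcomp. Qed.
Lemma fr4 : forall k, fv (mvec (mpow (minv G1) k) b1) = P1 (INR k). Proof. fvcomp. Qed.
Lemma fr5 : forall k, fv (mvec (mpow (minv G1) k) b2) = P0 (INR k). Proof. fvcomp. Qed.
Lemma fr6 : forall k, fv (mvec (mpow (minv G1) k) b3) = P6 (INR k). Proof. fvcomp. Qed.
Lemma fr7 : forall k, fv (mvec (mpow (minv G1) k) b4) = P7 (INR k). Proof. fvcomp. Qed.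
Lemma fb4 : fv b4 = -9/2. Proof. fvcomp. Qed.
Lemma fb1 : fv b1 = 0. Proof. fvcomp. Qed.
Lemma fb2 : fv b2 = 0. Proof. fvcomp. Qed.
Lemma fb3 : fv b3 = 0. Proof. fvcomp. Qed.

Lemma P0_zero : forall t, 1 <= t -> (P0 t = 0 <-> t = 1).
Proof. intros t Ht. unfold P0.
  replace (3/2*t - 2*t^2 + 3/4*t^3 - 1/4*t^4) with (-t/4*((t-1)*(t*t-2*t+6))) by field.
  split; intro H.
  - assert (A: t*t - 2*t + 6 > 0) by nra.
    assert (B: (t-1)*(t*t-2*t+6) = 0).
    { apply (Rmult_eq_reg_l (-t/4)). lra. lra. }
    apply Rmult_integral in B. destruct B; lra.
  - rewrite H. field. Qed.
Lemma P6_zero : forall t, 1 <= t -> (P6 t = 0 <-> t = 1).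
Proof. intros t Ht. unfold P6.
  replace (5/4*t - 7/4*t^2 + t^3 - 1/2*t^4) with (-t/4*((t-1)*(2*t*t-2*t+5))) by field.
  split; intro H.
  - assert (A: 2*t*t - 2*t + 5 > 0) by nra.
    assert (B: (t-1)*(2*t*t-2*t+5) = 0).
    { apply (Rmult_eq_reg_l (-t/4)). lra. lra. }
    apply Rmult_integral in B. destruct B; lra.
  - rewrite H. field. Qed.
Lemma P1_neg : forall t, 1 <= t -> P1 t < 0.
Proof. intros t Ht. unfold P1. assert (0 < t^2) by nra. assert (0<t^3) by (simpl; nra). assert (0<t^4) by (simpl; nra). lra. Qed.
Lemma P2_neg : forall t, 1 <= t -> P2 t < 0.
Proof. intros t Ht. unfold P2. assert (0 < t^2) by nra. assert (0<t^3) by (simpl; nra). assert (0<t^4) by (simpl; nra). lra. Qed.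
Lemma P3_neg : forall t, 1 <= t -> P3 t < 0.
Proof. intros t Ht. unfold P3. assert (0 < t^2) by nra. assert (0<t^3) by (simpl; nra). assert (0<t^4) by (simpl; nra). lra. Qed.
Lemma P7_neg : forall t, P7 t < 0.
Proof. intros t. unfold P7.
  replace (-9/2 + 4*t - 4*t^2 + 2*t^3 - 1/2*t^4) with (-1/2*((t*t-2*t)*(t*t-2*t) + 4*((t-1)*(t-1)) + 5)) by field.
  nra. Qed.

Lemma gamma_lo : forall q r, (r < 4)%nat -> gamma (5+8*q+r) =
  mmul (mmul (mpow G1 (S q)) (gamma_base (S r))) (mpow (minv G1) (S q)).
Proof. intros q r Hr. unfold gamma.
  replace ((5 + 8*q + r) <=? 4)%nat with false by (symmetry; apply Nat.leb_gt; lia).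
  replace ((5 + 8 * q + r - 5) / 8)%nat with q by (apply (Nat.div_unique _ _ _ r); lia).
  replace ((5 + 8 * q + r - 5) mod 8)%nat with r by (apply (Nat.mod_unique _ _ q); lia).
  replace (r <? 4)%nat with true by (symmetry; apply Nat.ltb_lt; lia). reflexivity. Qed.
Lemma gamma_hi : forall q r, (r < 4)%nat -> gamma (5+8*q+(4+r)) =
  mmul (mmul (mpow (minv G1) (S q)) (gamma_base (S r))) (mpow G1 (S q)).
Proof. intros q r Hr. unfold gamma.
  replace ((5 + 8*q + (4+r)) <=? 4)%nat with false by (symmetry; apply Nat.leb_gt; lia).
  replace ((5 + 8 * q + (4+r) - 5) / 8)%nat with q by (apply (Nat.div_unique _ _ _ (4+r)); lia).
  replace ((5 + 8 * q + (4+r) - 5) mod 8)%nat with (4+r)%nat by (apply (Nat.mod_unique _ _ q); lia).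
  replace (4 + r <? 4)%nat with false by (symmetry; apply Nat.ltb_ge; lia).
  replace (4 + r - 3)%nat with (S r) by lia. reflexivity. Qed.

Lemma INR_S1 : forall q, INR (S q) = 1 <-> q = 0%nat.
Proof. intro q. rewrite S_INR. split; intro H.
  - apply INR_eq. simpl. lra.
  - subst. simpl. lra. Qed.
Lemma INR_S_ge1 : forall q, 1 <= INR (S q).
Proof. intro q. rewrite S_INR. pose proof (pos_INR q). lra. Qed.

Lemma bis : forall j, (1 <= j)%nat -> (fchart j p2 = 0 <-> In j six).
Proof.
  intros j Hj. change (fchart j p2) with (fv (mvec (gamma j) Qv)).
  destruct (Nat.le_gt_cases j 4) as [Hle|Hgt].
  - destruct j as [|[|[|[|[|j]]]]]; try lia; cbv [gamma Nat.leb];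
      [rewrite W1, fb1 | rewrite W2, fb2 | rewrite W3, fb3 | rewrite W4, fb4]; simpl; split; intros; try lra; try tauto; lia.
  - assert (E: j = (5 + 8*((j-5)/8) + (j-5) mod 8)%nat).
    { pose proof (Nat.div_mod (j-5) 8). lia. }
    assert (Hr: ((j-5) mod 8 < 8)%nat) by (apply Nat.mod_upper_bound; lia).
    revert E Hr. generalize ((j-5)/8)%nat ((j-5) mod 8)%nat. intros q r E Hr. subst j.
    pose proof (INR_S_ge1 q) as Ht. pose proof (INR_S1 q) as H1.
    destruct r as [|[|[|[|[|[|[|[|r]]]]]]]]; try lia.
    + rewrite gamma_lo by lia. rewrite !mvec_mmul, (mpow_fix _ _ _ G1iQ), W1, fr0.
      rewrite P0_zero, H1 by exact Ht. unfold six; cbn [In]. lia.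
    + rewrite gamma_lo by lia. rewrite !mvec_mmul, (mpow_fix _ _ _ G1iQ), W2, fr1.
      pose proof (P1_neg _ Ht). unfold six; cbn [In]. split; intros; [lra | lia].
    + rewrite gamma_lo by lia. rewrite !mvec_mmul, (mpow_fix _ _ _ G1iQ), W3, fr2.
      pose proof (P2_neg _ Ht). unfold six; cbn [In]. split; intros; [lra | lia].
    + rewrite gamma_lo by lia. rewrite !mvec_mmul, (mpow_fix _ _ _ G1iQ), W4, fr3.
      pose proof (P3_neg _ Ht). unfold six; cbn [In]. split; intros; [lra | lia].
    + replace (5 + 8*q + 4)%nat with (5 + 8*q + (4+0))%nat by lia. rewrite gamma_hi by lia.
      rewrite !mvec_mmul, (mpow_fix _ _ _ G1Q), W1, fr4.
      pose proof (P1_neg _ Ht). unfold six; cbn [In]. split; intros; [lra | lia].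
    + replace (5 + 8*q + 5)%nat with (5 + 8*q + (4+1))%nat by lia. rewrite gamma_hi by lia.
      rewrite !mvec_mmul, (mpow_fix _ _ _ G1Q), W2, fr5.
      rewrite P0_zero, H1 by exact Ht. unfold six; cbn [In]. lia.
    + replace (5 + 8*q + 6)%nat with (5 + 8*q + (4+2))%nat by lia. rewrite gamma_hi by lia.
      rewrite !mvec_mmul, (mpow_fix _ _ _ G1Q), W3, fr6.
      rewrite P6_zero, H1 by exact Ht. unfold six; cbn [In]. lia.
    + replace (5 + 8*q + 7)%nat with (5 + 8*q + (4+3))%nat by lia. rewrite gamma_hi by lia.
      rewrite !mvec_mmul, (mpow_fix _ _ _ G1Q), W4, fr7.
      pose proof (P7_neg (INR (S q))). unfold six; cbn [In]. split; intros; [lra | lia].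
Qed.

Lemma chartV : forall p, chart p = V (x0 p) (x1 p) (x2 p) (x3 p) 1 0.
Proof. reflexivity. Qed.

Lemma p2_fixed : fixed_by_G2 p2.
Proof. split.
  - unfold in_H2C, p2. cunf. pose proof s7_2. nra.
  - exists Defs.C1. rewrite chartV, mvG2. unfold p2, V. cunf. veq. Qed.

Lemma p2_unique : forall q, fixed_by_G2 q -> q = p2.
Proof. intros [a b c d] [Hn [[lr li] H]]. unfold in_H2C in Hn.
  rewrite chartV, mvG2 in H. unfold V, Vscale in H. cunf.
  injection H. intros h6 h5 h4 h3 h2 h1.
  assert (Elr : lr = -a) by lra. assert (Eli : li = -b) by lra. subst lr li.
  assert (Pr : (a+1)*(a*a-b*b+1) - b*(2*a*b) = 0).
  { transitivity ((a-1)*(2*a + 3*c/2 + s7*d/2 - 1 + a*a - b*b) - b*(2*b + 3*d/2 - s7*c/2 + 2*a*b)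
       - (3/2*(-3*a/2 + s7*b/2 - c + a*c - b*d) + s7/2*(-3*b/2 - s7*a/2 - d + a*d + b*c))).
    s7ring.
    replace (2*a + 3*c/2 + s7*d/2 - 1 + a*a - b*b) with 0 by lra.
    replace (2*b + 3*d/2 - s7*c/2 + 2*a*b) with 0 by lra.
    replace (-3*a/2 + s7*b/2 - c + a*c - b*d) with 0 by lra.
    replace (-3*b/2 - s7*a/2 - d + a*d + b*c) with 0 by lra. field. }
  assert (Pi : (a+1)*(2*a*b) + b*(a*a-b*b+1) = 0).
  { transitivity ((a-1)*(2*b + 3*d/2 - s7*c/2 + 2*a*b) + b*(2*a + 3*c/2 + s7*d/2 - 1 + a*a - b*b)
       - (3/2*(-3*b/2 - s7*a/2 - d + a*d + b*c) - s7/2*(-3*a/2 + s7*b/2 - c + a*c - b*d))).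
    s7ring.
    replace (2*a + 3*c/2 + s7*d/2 - 1 + a*a - b*b) with 0 by lra.
    replace (2*b + 3*d/2 - s7*c/2 + 2*a*b) with 0 by lra.
    replace (-3*a/2 + s7*b/2 - c + a*c - b*d) with 0 by lra.
    replace (-3*b/2 - s7*a/2 - d + a*d + b*c) with 0 by lra. field. }
  assert (N : ((a+1)*(a+1)+b*b) * ((a*a-b*b+1)*(a*a-b*b+1) + (2*a*b)*(2*a*b)) = 0).
  { transitivity (((a+1)*(a*a-b*b+1) - b*(2*a*b))^2 + ((a+1)*(2*a*b) + b*(a*a-b*b+1))^2).
    ring. rewrite Pr, Pi. ring. }
  apply Rmult_integral in N. destruct N as [N|N].
  - assert (a = -1) by nra. assert (b = 0) by nra. subst a b.
    assert (c = 3/4) by lra. assert (d = s7/4) by lra. subst c d. reflexivity.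
  - assert (Z1 : a*a-b*b+1 = 0) by nra. assert (Z2 : a*b = 0) by nra.
    apply Rmult_integral in Z2. destruct Z2 as [Z2|Z2]; subst; nra.
Qed.

Definition lin (h : R4) : V3 := mkV3 (mkC (x0 h) (x1 h)) (mkC (x2 h) (x3 h)) Defs.C0.
Definition dg (W : V3) (p h : R4) : R :=
  2 * (re (herm (chart p) W) * re (herm (lin h) W) + im (herm (chart p) W) * im (herm (lin h) W)).
Definition sq4 (h : R4) := x0 h * x0 h + x1 h * x1 h + x2 h * x2 h + x3 h * x3 h.
Definition KW (W : V3) := 2 * (Cnorm2 (v2 W) + Cnorm2 (v1 W)).

Lemma g_expand : forall W p h, Cnorm2 (herm (chart (R4add p h)) W) - Cnorm2 (herm (chart p) W) - dg W p h
   = Cnorm2 (herm (lin h) W).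
Proof. intros [[a b] [c d] [e g]] [p0 p1 p2' p3] [h0 h1 h2 h3]. unfold dg, lin, R4add. cunf. ring. Qed.

Lemma KW_nonneg : forall W, 0 <= KW W.
Proof. intros [[a b] [c d] [e g]]. unfold KW. cunf. nra. Qed.

Lemma g_bound : forall W h, Cnorm2 (herm (lin h) W) <= KW W * sq4 h.
Proof. intros [[a b] [c d] [e g]] [h0 h1 h2 h3]. unfold KW, sq4, lin. cunf.
  set (ur := h0*e + h1*g). set (ui := h1*e - h0*g).
  set (vr := h2*c + h3*d). set (vi := h3*c - h2*d).
  match goal with |- ?L <= _ => replace L with ((ur+vr)*(ur+vr) + (ui+vi)*(ui+vi)) by (unfold ur, ui, vr, vi; ring) end.
  assert (E1 : ur*ur + ui*ui = (h0*h0+h1*h1)*(e*e+g*g)) by (unfold ur, ui; ring).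
  assert (E2 : vr*vr + vi*vi = (h2*h2+h3*h3)*(c*c+d*d)) by (unfold vr, vi; ring). clearbody ur ui vr vi.
  assert (I1 : (ur+vr)*(ur+vr) + (ui+vi)*(ui+vi) <= 2*(ur*ur+ui*ui) + 2*(vr*vr+vi*vi)). { pose proof (Rle_0_sqr (ur-vr)); pose proof (Rle_0_sqr (ui-vi)); unfold Rsqr in *; lra. }
  assert (I2 : (h0*h0+h1*h1)*(e*e+g*g) <= (h0*h0+h1*h1+h2*h2+h3*h3)*(e*e+g*g)).
  { apply Rmult_le_compat_r; nra. }
  assert (I3 : (h2*h2+h3*h3)*(c*c+d*d) <= (h0*h0+h1*h1+h2*h2+h3*h3)*(c*c+d*d)).
  { apply Rmult_le_compat_r; nra. }
  nra. Qed.

Lemma dg_add : forall W p h k, dg W p (R4add h k) = dg W p h + dg W p k.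
Proof. intros [[a b] [c d] [e g]] [p0 p1 p2' p3] [h0 h1 h2 h3] [k0 k1 k2 k3]. unfold dg, lin, R4add. cunf. ring. Qed.
Lemma dg_scale : forall W p s h, dg W p (R4scale s h) = s * dg W p h.
Proof. intros [[a b] [c d] [e g]] [p0 p1 p2' p3] s [h0 h1 h2 h3]. unfold dg, lin, R4scale. cunf. ring. Qed.

Lemma sq4_nonneg : forall h, 0 <= sq4 h.
Proof. intros [h0 h1 h2 h3]. unfold sq4. simpl. nra. Qed.

Lemma diff_general : forall W1 W2 p,
  is_differential (fun p => Cnorm2 (herm (chart p) W1) - Cnorm2 (herm (chart p) W2)) p
    (fun h => dg W1 p h - dg W2 p h).
Proof. intros W1 W2 p. split.
  - split; intros; rewrite ?dg_add, ?dg_scale; ring.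
  - intros eps Heps. pose proof (KW_nonneg W1). pose proof (KW_nonneg W2).
    set (K := KW W1 + KW W2).
    exists (eps / (K + 1)). split.
    + apply Rdiv_lt_0_compat; unfold K; lra.
    + intros h Hh.
      assert (E : Cnorm2 (herm (chart (R4add p h)) W1) - Cnorm2 (herm (chart (R4add p h)) W2) -
          (Cnorm2 (herm (chart p) W1) - Cnorm2 (herm (chart p) W2)) - (dg W1 p h - dg W2 p h)
          = Cnorm2 (herm (lin h) W1) - Cnorm2 (herm (lin h) W2)).
      { pose proof (g_expand W1 p h). pose proof (g_expand W2 p h). lra. }
      rewrite E.
      pose proof (g_bound W1 h). pose proof (g_bound W2 h).
      assert (N1 : 0 <= Cnorm2 (herm (lin h) W1)) by (unfold Cnorm2; nra).
      assert (N2 : 0 <= Cnorm2 (herm (lin h) W2)) by (unfold Cnorm2; nra).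
      assert (Hs : sq4 h = R4norm h * R4norm h).
      { unfold R4norm. rewrite sqrt_sqrt. reflexivity. apply sq4_nonneg. }
      assert (Hn : 0 <= R4norm h) by (unfold R4norm; apply sqrt_pos).
      assert (Hd : (K+1) * R4norm h < eps).
      { apply (Rmult_lt_compat_l (K+1)) in Hh; [|unfold K; lra].
        replace ((K+1) * (eps / (K+1))) with eps in Hh by (field; unfold K; lra). lra. }
      apply Rabs_le. split.
      * assert (K * sq4 h <= eps * R4norm h).
        { rewrite Hs. unfold K in *. nra. }
        unfold K in *. nra.
      * assert (K * sq4 h <= eps * R4norm h).
        { rewrite Hs. unfold K in *. nra. }
        unfold K in *. nra.
Qed.

Definition df (j : nat) (h : R4) : R := dg Qv p2 h - dg (mvec (gamma j) Qv) p2 h.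

Lemma df_diff : forall j, is_differential (fchart j) p2 (df j).
Proof. intro j. exact (diff_general Qv (mvec (gamma j) Qv) p2). Qed.

Lemma gam5 : mvec (gamma 5) Qv = mvec (mpow G1 1) b1.
Proof. change (gamma 5) with (gamma (5+8*0+0)). rewrite gamma_lo by lia.
  rewrite !mvec_mmul, (mpow_fix _ _ _ G1iQ), W1. reflexivity. Qed.
Lemma gam10 : mvec (gamma 10) Qv = mvec (mpow (minv G1) 1) b2.
Proof. change (gamma 10) with (gamma (5+8*0+(4+1))). rewrite gamma_hi by lia.
  rewrite !mvec_mmul, (mpow_fix _ _ _ G1Q), W2. reflexivity. Qed.
Lemma gam11 : mvec (gamma 11) Qv = mvec (mpow (minv G1) 1) b3.
Proof. change (gamma 11) with (gamma (5+8*0+(4+2))). rewrite gamma_hi by lia.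
  rewrite !mvec_mmul, (mpow_fix _ _ _ G1Q), W3. reflexivity. Qed.
Lemma gam1 : mvec (gamma 1) Qv = b1. Proof. exact W1. Qed.
Lemma gam2 : mvec (gamma 2) Qv = b2. Proof. exact W2. Qed.
Lemma gam3 : mvec (gamma 3) Qv = b3. Proof. exact W3. Qed.

Ltac dfcomp g := intros [h0 h1 h2 h3]; unfold df, dg; rewrite g; unfold b1, b2, b3;
  rewrite ?mvG1k, ?mvG1ik; unfold V, p2, lin, Qv; cunf; simpl INR; s7ring.

Lemma df1 : forall h, df 1 h = 2*x0 h + 3*x2 h + s7*x3 h. Proof. dfcomp gam1. Qed.
Lemma df2 : forall h, df 2 h = 2*x0 h. Proof. dfcomp gam2. Qed.
Lemma df3 : forall h, df 3 h = 5/2*x0 h - s7/2*x1 h + 3/2*x2 h + s7/2*x3 h. Proof. dfcomp gam3. Qed.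
Lemma df5 : forall h, df 5 h = 3/2*x0 h + s7/2*x1 h - x2 h + s7*x3 h. Proof. dfcomp gam5. Qed.
Lemma df10 : forall h, df 10 h = 3/2*x0 h + s7/2*x1 h + 3/2*x2 h + s7/2*x3 h. Proof. dfcomp gam10. Qed.
Lemma df11 : forall h, df 11 h = 5/2*x0 h - s7/2*x1 h + 4*x2 h. Proof. dfcomp gam11. Qed.

Lemma dfv1_0 : df 1 (mkR4 1 0 0 0) = (2). Proof. rewrite df1. cbn [x0 x1 x2 x3]. pose proof s7_2. field_simplify; try lra; nra. Qed.
Lemma dfv1_1 : df 1 (mkR4 0 s7 0 0) = (0). Proof. rewrite df1. cbn [x0 x1 x2 x3]. pose proof s7_2. field_simplify; try lra; nra. Qed.
Lemma dfv1_2 : df 1 (mkR4 0 0 1 0) = (3). Proof. rewrite df1. cbn [x0 x1 x2 x3]. pose proof s7_2. field_simplify; try lra; nra. Qed.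
Lemma dfv1_3 : df 1 (mkR4 0 0 0 s7) = (7). Proof. rewrite df1. cbn [x0 x1 x2 x3]. pose proof s7_2. field_simplify; try lra; nra. Qed.
Lemma dfv2_0 : df 2 (mkR4 1 0 0 0) = (2). Proof. rewrite df2. cbn [x0 x1 x2 x3]. pose proof s7_2. field_simplify; try lra; nra. Qed.
Lemma dfv2_1 : df 2 (mkR4 0 s7 0 0) = (0). Proof. rewrite df2. cbn [x0 x1 x2 x3]. pose proof s7_2. field_simplify; try lra; nra. Qed.
Lemma dfv2_2 : df 2 (mkR4 0 0 1 0) = (0). Proof. rewrite df2. cbn [x0 x1 x2 x3]. pose proof s7_2. field_simplify; try lra; nra. Qed.
Lemma dfv2_3 : df 2 (mkR4 0 0 0 s7) = (0). Proof. rewrite df2. cbn [x0 x1 x2 x3]. pose proof s7_2. field_simplify; try lra; nra. Qed.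
Lemma dfv3_0 : df 3 (mkR4 1 0 0 0) = (5/2). Proof. rewrite df3. cbn [x0 x1 x2 x3]. pose proof s7_2. field_simplify; try lra; nra. Qed.
Lemma dfv3_1 : df 3 (mkR4 0 s7 0 0) = (-7/2). Proof. rewrite df3. cbn [x0 x1 x2 x3]. pose proof s7_2. field_simplify; try lra; nra. Qed.
Lemma dfv3_2 : df 3 (mkR4 0 0 1 0) = (3/2). Proof. rewrite df3. cbn [x0 x1 x2 x3]. pose proof s7_2. field_simplify; try lra; nra. Qed.
Lemma dfv3_3 : df 3 (mkR4 0 0 0 s7) = (7/2). Proof. rewrite df3. cbn [x0 x1 x2 x3]. pose proof s7_2. field_simplify; try lra; nra. Qed.
Lemma dfv5_0 : df 5 (mkR4 1 0 0 0) = (3/2). Proof. rewrite df5. cbn [x0 x1 x2 x3]. pose proof s7_2. field_simplify; try lra; nra. Qed.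
Lemma dfv5_1 : df 5 (mkR4 0 s7 0 0) = (7/2). Proof. rewrite df5. cbn [x0 x1 x2 x3]. pose proof s7_2. field_simplify; try lra; nra. Qed.
Lemma dfv5_2 : df 5 (mkR4 0 0 1 0) = (-1). Proof. rewrite df5. cbn [x0 x1 x2 x3]. pose proof s7_2. field_simplify; try lra; nra. Qed.
Lemma dfv5_3 : df 5 (mkR4 0 0 0 s7) = (7). Proof. rewrite df5. cbn [x0 x1 x2 x3]. pose proof s7_2. field_simplify; try lra; nra. Qed.
Lemma dfv10_0 : df 10 (mkR4 1 0 0 0) = (3/2). Proof. rewrite df10. cbn [x0 x1 x2 x3]. pose proof s7_2. field_simplify; try lra; nra. Qed.
Lemma dfv10_1 : df 10 (mkR4 0 s7 0 0) = (7/2). Proof. rewrite df10. cbn [x0 x1 x2 x3]. pose proof s7_2. field_simplify; try lra; nra. Qed.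
Lemma dfv10_2 : df 10 (mkR4 0 0 1 0) = (3/2). Proof. rewrite df10. cbn [x0 x1 x2 x3]. pose proof s7_2. field_simplify; try lra; nra. Qed.
Lemma dfv10_3 : df 10 (mkR4 0 0 0 s7) = (7/2). Proof. rewrite df10. cbn [x0 x1 x2 x3]. pose proof s7_2. field_simplify; try lra; nra. Qed.
Lemma dfv11_0 : df 11 (mkR4 1 0 0 0) = (5/2). Proof. rewrite df11. cbn [x0 x1 x2 x3]. pose proof s7_2. field_simplify; try lra; nra. Qed.
Lemma dfv11_1 : df 11 (mkR4 0 s7 0 0) = (-7/2). Proof. rewrite df11. cbn [x0 x1 x2 x3]. pose proof s7_2. field_simplify; try lra; nra. Qed.
Lemma dfv11_2 : df 11 (mkR4 0 0 1 0) = (4). Proof. rewrite df11. cbn [x0 x1 x2 x3]. pose proof s7_2. field_simplify; try lra; nra. Qed.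
Lemma dfv11_3 : df 11 (mkR4 0 0 0 s7) = (0). Proof. rewrite df11. cbn [x0 x1 x2 x3]. pose proof s7_2. field_simplify; try lra; nra. Qed.
Ltac rwdfv H := rewrite ?dfv1_0, ?dfv1_1, ?dfv1_2, ?dfv1_3, ?dfv2_0, ?dfv2_1, ?dfv2_2, ?dfv2_3, ?dfv3_0, ?dfv3_1, ?dfv3_2, ?dfv3_3, ?dfv5_0, ?dfv5_1, ?dfv5_2, ?dfv5_3, ?dfv10_0, ?dfv10_1, ?dfv10_2, ?dfv10_3, ?dfv11_0, ?dfv11_1, ?dfv11_2, ?dfv11_3 in H.

Lemma perm_comb : forall Ls Ls' : list (R4 -> R), Permutation Ls Ls' ->
  forall cs', length cs' = length Ls' -> exists cs, length cs = length Ls /\ Permutation cs cs' /\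
    forall h, lin_comb cs Ls h = lin_comb cs' Ls' h.
Proof.
  intros Ls Ls' P. induction P; intros cs' Hl.
  - exists []. destruct cs'; [|discriminate]. repeat split; auto.
  - destruct cs' as [|c r]; [discriminate|]. simpl in Hl. injection Hl as Hl.
    destruct (IHP r Hl) as [cs0 [H1 [H2 H3]]]. exists (c :: cs0). simpl. repeat split; auto.
    intro h. rewrite H3. reflexivity.
  - destruct cs' as [|a [|b r]]; try discriminate. simpl in Hl. exists (b :: a :: r). simpl.
    repeat split; [lia | apply perm_swap | intro h; ring].
  - destruct (IHP2 cs' Hl) as [cs1 [H1 [H2 H3]]]. destruct (IHP1 cs1 H1) as [cs0 [G1' [G2' G3']]].
    exists cs0. repeat split; auto. eapply Permutation_trans; eauto. intro h. rewrite G3'. auto.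
Qed.

Lemma lin_indep_perm : forall Ls Ls', Permutation Ls Ls' -> lin_indep Ls -> lin_indep Ls'.
Proof. intros Ls Ls' P I cs' Hl Hz c Hc.
  destruct (perm_comb Ls Ls' P cs' Hl) as [cs [H1 [H2 H3]]].
  apply (I cs H1). intro h. rewrite H3. apply Hz.
  apply (Permutation_in _ (Permutation_sym H2)). exact Hc. Qed.

Definition sub (b1 b2 b3 b5 b10 b11 : bool) : list nat :=
  (if b1 then [1%nat] else []) ++ (if b2 then [2%nat] else []) ++ (if b3 then [3%nat] else []) ++
  (if b5 then [5%nat] else []) ++ (if b10 then [10%nat] else []) ++ (if b11 then [11%nat] else []).

Lemma NoDup_six : NoDup six.
Proof. unfold six. repeat constructor; simpl; intuition lia. Qed.

Lemma reduce_T : forall S, NoDup S -> incl S six ->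
  exists b1 b2 b3 b5 b10 b11, Permutation S (sub b1 b2 b3 b5 b10 b11).
Proof. intros S HN HI.
  set (T := filter (fun x => existsb (Nat.eqb x) S) six).
  assert (PT : Permutation S T).
  { apply NoDup_Permutation; auto.
    - apply NoDup_filter, NoDup_six.
    - intro x. unfold T. rewrite filter_In, existsb_exists. split.
      + intro Hx. split; [apply HI; auto|]. exists x. split; auto. apply Nat.eqb_refl.
      + intros [_ [y [Hy Hxy]]]. apply Nat.eqb_eq in Hxy. subst. auto. }
  exists (existsb (Nat.eqb 1) S), (existsb (Nat.eqb 2) S), (existsb (Nat.eqb 3) S),
    (existsb (Nat.eqb 5) S), (existsb (Nat.eqb 10) S), (existsb (Nat.eqb 11) S).
  unfold T, six in PT. cbn [filter] in PT. unfold sub.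
  destruct (existsb (Nat.eqb 1) S), (existsb (Nat.eqb 2) S), (existsb (Nat.eqb 3) S),
    (existsb (Nat.eqb 5) S), (existsb (Nat.eqb 10) S), (existsb (Nat.eqb 11) S); exact PT.
Qed.

Lemma perm_incl : forall T X : list nat, Permutation T X ->
  forallb (fun x => existsb (Nat.eqb x) T) X = true.
Proof. intros T X P. apply forallb_forall. intros x Hx. apply existsb_exists. exists x.
  split. apply (Permutation_in _ (Permutation_sym P)). exact Hx. apply Nat.eqb_refl. Qed.

Ltac indep :=
  let cs := fresh "cs" in let Hl := fresh "Hl" in let Hz := fresh "Hz" in
  let c := fresh "c" in let Hc := fresh "Hc" in
  intros cs Hl Hz c Hc; cbn [map length] in Hl;
  destruct cs as [|c1 [|c2 [|c3 [|c4 [|c5 cs]]]]]; cbn [length] in Hl; try discriminate;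
  pose proof (Hz (mkR4 1 0 0 0)) as E0; pose proof (Hz (mkR4 0 s7 0 0)) as E1;
  pose proof (Hz (mkR4 0 0 1 0)) as E2; pose proof (Hz (mkR4 0 0 0 s7)) as E3;
  cbn [lin_comb map] in E0, E1, E2, E3; rwdfv E0; rwdfv E1; rwdfv E2; rwdfv E3;
  cbn [In] in Hc; repeat destruct Hc as [Hc|Hc]; try contradiction; subst; lra.

Ltac depc c :=
  intros _ I; apply R1_neq_R0; apply (I c);
  [ reflexivity
  | intros [h0 h1 h2 h3]; cbn [map lin_comb]; rewrite ?df1, ?df2, ?df3, ?df5, ?df10, ?df11;
    cbn [x0 x1 x2 x3]; field
  | cbn [In]; left; reflexivity ].

Theorem proposition5p11 :
  exists p2 : R4,
    fixed_by_G2 p2 /\ (forall q, fixed_by_G2 q -> q = p2) /\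
    (forall j : nat, (1 <= j)%nat -> (in_bisector j p2 <-> In j six)) /\
    exists df : nat -> (R4 -> R),
      (forall j : nat, (1 <= j)%nat -> is_differential (fchart j) p2 (df j)) /\
      (forall S : list nat, NoDup S -> incl S six ->
         (length S = 2 \/ length S = 3)%nat -> lin_indep (map df S)) /\
      (forall S : list nat, NoDup S -> incl S six -> length S = 4%nat ->
         (~ lin_indep (map df S) <->
            Permutation S [1; 2; 3; 10]%nat \/
            Permutation S [1; 2; 5; 11]%nat \/
            Permutation S [3; 5; 10; 11]%nat)).
Proof.
  exists p2. split; [exact p2_fixed|]. split; [intros q Hq; exact (p2_unique q Hq)|]. split.
  { intros j Hj. unfold in_bisector. rewrite <- (bis j Hj). split.
    - intros [H _]; exact H.
    - intro H; split; [exact H | exact (proj1 p2_fixed)]. }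
  exists df. split; [intros j _; apply df_diff|]. split.
  - intros S HN HI Hlen. destruct (reduce_T S HN HI) as [b1 [b2 [b3 [b5 [b10 [b11 P]]]]]].
    apply (lin_indep_perm (map df (sub b1 b2 b3 b5 b10 b11))).
    { apply Permutation_map, Permutation_sym, P. }
    pose proof (Permutation_length P) as PL.
    destruct b1, b2, b3, b5, b10, b11; cbn [sub app length] in PL; try (exfalso; lia);
      cbv [sub app]; indep.
  - intros S HN HI Hlen. destruct (reduce_T S HN HI) as [b1 [b2 [b3 [b5 [b10 [b11 P]]]]]].
    assert (EQ1 : lin_indep (map df S) <-> lin_indep (map df (sub b1 b2 b3 b5 b10 b11))).
    { split; apply lin_indep_perm; apply Permutation_map; [exact P | apply Permutation_sym, P]. }
    assert (EQ2 : forall X, Permutation S X <-> Permutation (sub b1 b2 b3 b5 b10 b11) X).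
    { intro X. split; intro H; eapply Permutation_trans; [apply Permutation_sym, P | exact H | exact P | exact H]. }
    rewrite EQ1, !EQ2.
    pose proof (Permutation_length P) as PL.
    destruct b1, b2, b3, b5, b10, b11; cbn [sub app length] in PL; try (exfalso; lia);
      cbv [sub app];
      first
      [ split; [intros _; left; apply Permutation_refl | depc [1;1;-1;-1]]
      | split; [intros _; right; left; apply Permutation_refl | depc [1;1;-1;-1]]
      | split; [intros _; right; right; apply Permutation_refl | depc [1;-1;1;-1]]
      | split; [intro N; exfalso; apply N; indep
               | intros [Q|[Q|Q]]; apply perm_incl in Q; vm_compute in Q; discriminate ] ].
Qed.
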